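(* Let $N,q,L\in\mathbb{N}_{\ge1}$, $0<\varepsilon\le\frac1{2NL}$, and let $s\in S=\frac1{NL}\{0,\dots,L-1\}^n$ satisfy $H(\varepsilon)\cap G(s)=\emptyset$, where $G(s)=\{s+\frac1Nv:v\in\{0,\dots,qN-1\}^n\}$. Let $H_{\mathrm{bound}}=(-\frac1N,0]^n+H$. Then $$\frac{|G(s)\setminus H_{\mathrm{bound}}|}{|G(s)|}\ge 1-\frac1N\cdot\frac{nD(q+1+A+C)^n(A+2/N)^{n-1}}{(Cq)^n}.$$
   Context: An $n$-dimensional infrastructure consists of a full-rank lattice $\Lambda\subset\mathbb{R}^n$, a finite non-empty set $X$, an injective map $d:X\to\mathbb{R}^n/\Lambda$, and a set $\mathrm{fRep}\subseteq X\times\mathbb{R}^n$ with $X\times\{0\}\subseteq\mathrm{fRep}$ such that $\Phi:\mathrm{fRep}\to\mathbb{R}^n/\Lambda$, $(x,t)\mapsto d(x)+t$, is a bijection. Let $\pi:\mathbb{R}^n\to\mathbb{R}^n/\Lambda$ be the projection, $\hat X=\pi^{-1}(d(X))$, and for $\hat x\in\hat X$ let $\hat V_{\hat x}=\{\hat x+t:(d^{-1}(\pi(\hat x)),t)\in\mathrm{fRep}\}$; these sets partition $\mathbb{R}^n$. Standing assumptions: the infrastructure is cornered (for each $\hat x$, $\hat x\in\hat V_{\hat x}$ and $\{r:\hat x\le r\le t\}\subseteq\hat V_{\hat x}$ for all $t\in\hat V_{\hat x}$, componentwise order); (A1) there is $A>0$ with $\hat V_{\hat x}\subseteq\hat x+[0,A]^n$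 for all $\hat x$; (A2) there are $C,D>0$ such that $(r+[0,C]^n)\cap\hat X$ has at most $D$ elements for every $r\in\mathbb{R}^n$. $H=\bigcup_{\hat x\in\hat X}\partial\hat V_{\hat x}$ (topological boundaries) and $H(\varepsilon)=H+[-\varepsilon,\varepsilon]^n$. *)

(* Defs.v *)
From HB Require Import structures.
From mathcomp Require Import all_boot all_order all_algebra.
From mathcomp Require Import all_classical all_reals.
From mathcomp Require Import topology normedtype.
Import numFieldNormedType.Exports.
Set Implicit Arguments. Unset Strict Implicit. Unset Printing Implicit Defensive.
Import Order.TTheory GRing.Theory Num.Theory.
Local Open Scope classical_set_scope.
Local Open Scope ring_scope.

Section Infra.
Variables (R : realType) (n : nat).
Notation vec := 'rV[R]_n.

Definition full_rank_lattice (Lam : set vec) : Prop :=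
  exists B : 'M[R]_n, B \in unitmx /\
    Lam = [set z *m B | z in [set z : vec | forall i, z 0 i \is a Num.int]].

(* An infrastructure (Lambda, X, d, fRep).  The map d : X -> R^n/Lambda is
   represented by a lift d : X -> R^n (d(x) = pi(d x)). *)
Definition infrastructure (Lam : set vec) (X : finType) (d : X -> vec)
    (fRep : set (X * vec)) : Prop :=
  [/\ full_rank_lattice Lam,
      (0 < #|X|)%N,
      (forall x y, Lam (d x - d y) -> x = y),
      (forall x, fRep (x, 0)) &
      (forall y : vec, exists! p, fRep p /\ Lam (y - (d p.1 + p.2)))]. (* Phi bij. *)

Definition Xhat (Lam : set vec) (X : finType) (d : X -> vec) : set vec :=
  [set xh | exists x, Lam (xh - d x)].

Definition Vhat (Lam : set vec) (X : finType) (d : X -> vec)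
    (fRep : set (X * vec)) (xh : vec) : set vec :=
  [set y | exists x t, [/\ Lam (xh - d x), fRep (x, t) & y = xh + t]].

Definition vle (u v : vec) : Prop := forall i, u 0 i <= v 0 i.

Definition cornered (Lam : set vec) (X : finType) (d : X -> vec)
    (fRep : set (X * vec)) : Prop :=
  forall xh, Xhat Lam d xh ->
    Vhat Lam d fRep xh xh /\
    (forall t, Vhat Lam d fRep xh t ->
       [set r | vle xh r /\ vle r t] `<=` Vhat Lam d fRep xh).

Definition box (r : vec) (a b : R) : set vec :=
  [set y | forall i, r 0 i + a <= y 0 i <= r 0 i + b].

Definition box_oc (r : vec) (a b : R) : set vec :=
  [set y | forall i, r 0 i + a < y 0 i <= r 0 i + b].

Definition msum (P Q : set vec) : set vec := [set p + q | p in P & q in Q].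

Definition boundary (V : set vec) : set vec := closure V `\` interior V.

Definition Hset (Lam : set vec) (X : finType) (d : X -> vec)
    (fRep : set (X * vec)) : set vec :=
  \bigcup_(xh in Xhat Lam d) boundary (Vhat Lam d fRep xh).

Definition at_most (A : set vec) (D : R) : Prop :=
  forall s : seq vec, uniq s -> (forall y, y \in s -> A y) -> (size s)%:R <= D.

Definition grid_pt (N q : nat) (s : vec) (v : {ffun 'I_n -> 'I_(q * N)}) : vec :=
  s + (N%:R)^-1 *: \row_i ((v i : nat)%:R).

End Infra.
Arguments grid_pt {R n} N q s v.

(* Main.v *)
Require Import Defs.
From HB Require Import structures.
From mathcomp Require Import all_boot all_order all_algebra.
From mathcomp Require Import all_classical all_reals.
From mathcomp Require Import topology normedtype.
From mathcomp Require Import ring lra zify.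
Import numFieldNormedType.Exports.
Import Order.TTheory GRing.Theory Num.Theory.
Local Open Scope classical_set_scope.
Local Open Scope ring_scope.
Set Implicit Arguments. Unset Strict Implicit.


Lemma nbhs_boxP (R : realType) n (x : 'rV[R]_n) (A : set 'rV[R]_n) :
  nbhs x A <-> exists2 e, 0 < e & forall y : 'rV[R]_n, (forall i, `|x 0 i - y 0 i| < e) -> A y.
Proof.
split.
- move=> /nbhs_ballP [e e0 H]; exists e => //. move=> y Hy. apply: H.
  split => // i j; rewrite (ord1 i) /ball /=. exact: Hy.
- move=> [e e0 H]; apply/nbhs_ballP; exists e => // y [_ Hy]; apply: H => i.
  exact: Hy.
Qed.

Lemma V_disj (R : realType) n (Lam : set 'rV[R]_n) (X : finType) (d : X -> 'rV[R]_n)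
  (fRep : set (X * 'rV[R]_n)) xh xh' y :
  infrastructure Lam d fRep -> Vhat Lam d fRep xh y -> Vhat Lam d fRep xh' y -> xh = xh'.
Proof.
case=> _ _ _ _ Hu [x [t [L1 F1 E1]]] [x' [t' [L2 F2 E2]]].
have [p [_ Hp]] := Hu y.
have e1 : p = (x, t).
  apply: Hp; split => //=; by rewrite E1 opprD addrACA subrr addr0.
have e2 : p = (x', t').
  apply: Hp; split => //=; by rewrite E2 opprD addrACA subrr addr0.
have : (x, t) = (x', t') by rewrite -e1 -e2.
case=> _ et.
by apply: (addIr t); rewrite -E1 et -E2.
Qed.

Lemma V_cover (R : realType) n (Lam : set 'rV[R]_n) (X : finType) (d : X -> 'rV[R]_n)
  (fRep : set (X * 'rV[R]_n)) y :
  infrastructure Lam d fRep -> exists xh, Xhat Lam d xh /\ Vhat Lam d fRep xh y.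
Proof.
case=> _ _ _ _ Hu; have [[x t] [[F L] _]] := Hu y.
exists (y - t); split.
  by exists x; move: L => /=; rewrite opprD addrA addrAC.
exists x, t; split => //; last by rewrite subrK.
by move: L => /=; rewrite opprD addrA addrAC.
Qed.

Lemma int_gt (R : realType) n (Lam : set 'rV[R]_n) (X : finType) (d : X -> 'rV[R]_n)
  (fRep : set (X * 'rV[R]_n)) (A : R) xh y :
  Vhat Lam d fRep xh `<=` box xh 0 A ->
  interior (Vhat Lam d fRep xh) y -> forall i, xh 0 i < y 0 i.
Proof.
move=> Hb /nbhs_boxP [e e0 He] i.
have : box xh 0 A (y - const_mx (e / 2)).
  apply: Hb; apply: He => l; rewrite !mxE opprB addrC subrK ger0_norm ?divr_ge0 ?ltW //.
  by rewrite ltr_pdivrMr // ltr_pMr // ltr1n.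
move=> /(_ i) /andP [+ _]; rewrite !mxE addr0 => h.
apply: (le_lt_trans h); rewrite ltrBlDr ltrDl divr_gt0 //.
Qed.

Lemma pos_lb (R : realType) (I : finType) (f : I -> R) :
  (forall i, 0 < f i) -> exists2 e, 0 < e & forall i, e <= f i.
Proof.
move=> Hf; exists (\big[Order.min/1]_i f i).
  by apply/bigmin_gtP; split => // i _; apply: Hf.
by move=> i; apply: bigmin_le.
Qed.

Lemma between (R : realType) n (Lam : set 'rV[R]_n) (X : finType) (d : X -> 'rV[R]_n)
  (fRep : set (X * 'rV[R]_n)) xh (a b : 'rV[R]_n) :
  cornered Lam d fRep -> Xhat Lam d xh ->
  (forall i, xh 0 i < a 0 i) -> (forall i, a 0 i <= b 0 i) ->
  interior (Vhat Lam d fRep xh) b -> interior (Vhat Lam d fRep xh) a.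
Proof.
move=> Hc Hx Ha Hab /nbhs_boxP [e e0 He].
set b' := b + const_mx (e / 2).
have e20 : 0 < e / 2 by rewrite divr_gt0.
have Vb' : Vhat Lam d fRep xh b'.
  apply: He => l; rewrite !mxE opprD addrA subrr add0r normrN ger0_norm ?ltW //.
  by rewrite ltr_pdivrMr // ltr_pMr // ltr1n.
have Hsub := (Hc xh Hx).2 b' Vb'.
have [e' e'0 He'] : exists2 e', 0 < e' & forall i, e' <= a 0 i - xh 0 i.
  by apply: pos_lb => i; rewrite subr_gt0; apply: Ha.
apply/nbhs_boxP; exists (Order.min e' (e / 2)).
  by rewrite lt_min e'0 e20.
move=> y Hy; apply: Hsub; split => l.
- have := Hy l; rewrite lt_min !ltr_norml => /andP [/andP [h1 h2] /andP [h4 h5]].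
  have := He' l => h3. lra.
- have := Hy l; rewrite lt_min !ltr_norml => /andP [/andP [h4 h5] /andP [h1 h2]].
  have := Hab l => h3. rewrite /b' !mxE. lra.
Qed.


Lemma succ_not_int (R : realType) n (Lam : set 'rV[R]_n) (X : finType) (d : X -> 'rV[R]_n)
  (fRep : set (X * 'rV[R]_n)) (A w : R) xh (g : 'rV[R]_n) :
  infrastructure Lam d fRep -> cornered Lam d fRep ->
  Vhat Lam d fRep xh `<=` box xh 0 A -> Xhat Lam d xh ->
  interior (Vhat Lam d fRep xh) g ->
  msum (box_oc 0 (- w) 0) (Hset Lam d fRep) g ->
  ~ interior (Vhat Lam d fRep xh) (g + const_mx w).
Proof.
move=> Hi Hc Hb Hx Hg [b Hbb [h [xh' Hx' [Hcl Hni]] Eg]] Hs.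
have hh : forall i, g 0 i <= h 0 i /\ h 0 i <= (g + const_mx w) 0 i.
  move=> i; have := Hbb i; rewrite -Eg !mxE => /andP [h1 h2]; split; lra.
have hint : interior (Vhat Lam d fRep xh) h.
  apply: (between Hc Hx _ _ Hs) => i; last by case: (hh i).
  apply: (lt_le_trans (int_gt Hb Hg i)); by case: (hh i).
have [z [z1 z2]] := Hcl _ hint.
have e := V_disj Hi z2 z1.
by apply: Hni; rewrite -e.
Qed.

Lemma good_int (R : realType) n (Lam : set 'rV[R]_n) (X : finType) (d : X -> 'rV[R]_n)
  (fRep : set (X * 'rV[R]_n)) (eps : R) (g : 'rV[R]_n) :
  infrastructure Lam d fRep -> 0 <= eps ->
  ~ msum (Hset Lam d fRep) (box 0 (- eps) eps) g ->
  exists xh, Xhat Lam d xh /\ interior (Vhat Lam d fRep xh) g.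
Proof.
move=> Hi he Hn; have [xh [Hx Vg]] := V_cover g Hi.
exists xh; split => //.
case: (pselect (interior (Vhat Lam d fRep xh) g)) => // Hni; exfalso; apply: Hn.
exists g.
  exists xh => //; split => //; exact: subset_closure.
exists 0; last by rewrite addr0.
by move=> i; rewrite !mxE; apply/andP; split; lra.
Qed.


Lemma int_small (R : realType) (z : int) : `|z%:~R : R| < 1 -> z = 0.
Proof.
case: z => m.
- rewrite /= normr_nat ltrn1 => h; congr Posz; by case: m h.
- rewrite NegzE intrN normrN /= normr_nat ltrn1 //.
Qed.

Lemma grid_coord (R : realType) n (N q : nat) (s : 'rV[R]_n) v l :
  (0 < N)%N ->
  (grid_pt N q s v) 0 l = s 0 l + (N%:R)^-1 * (v l)%:R /\
  0 <= (N%:R : R)^-1 * (v l)%:R < q%:R.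
Proof.
move=> N0; rewrite /grid_pt !mxE; split => //.
have hN : (0 : R) < N%:R by rewrite ltr0n.
have hv : ((v l)%:R : R) < q%:R * N%:R by rewrite -natrM ltr_nat ltn_ord.
apply/andP; split; first by rewrite mulr_ge0 // invr_ge0 ltW.
by rewrite ltr_pdivrMl // mulrC.
Qed.

Definition rj (R : realType) n M (s : 'rV[R]_n) (A C : R) (j : {ffun 'I_n -> 'I_M}) : 'rV[R]_n :=
  \row_l (s 0 l - A + C * (j l : nat)%:R).
Arguments rj {R n M} s A C j.

Definition Spec (R : realType) n' (Lam : set 'rV[R]_n'.+1) (X : finType) (d : X -> 'rV[R]_n'.+1)
  (fRep : set (X * 'rV[R]_n'.+1)) (A C : R) (N M K : nat) (s g xh : 'rV[R]_n'.+1)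
  (j : {ffun 'I_n'.+1 -> 'I_M}) (i : 'I_n'.+1) (c : {ffun 'I_n' -> 'I_K}) : Prop :=
  [/\ Xhat Lam d xh, interior (Vhat Lam d fRep xh) g,
      ~ interior (Vhat Lam d fRep xh) (g + const_mx (N%:R)^-1),
      box (rj s A C j) 0 C xh &
      exists k : int, k%:~R < N%:R * (g 0 i - xh 0 i) <= k%:~R + 1 /\
        forall l', (c l' : nat)%:R <= N%:R * (g 0 (lift i l') - xh 0 (lift i l')) - k%:~R
                   < (c l' : nat)%:R + 1].
Arguments Spec {R n'} Lam {X} d fRep A C N M K s g xh j i c.

Lemma one_side (R : realType) n' (Lam : set 'rV[R]_n'.+1) (X : finType) (d : X -> 'rV[R]_n'.+1)
  (fRep : set (X * 'rV[R]_n'.+1)) (A C : R) (N M K : nat) (s g g' xh : 'rV[R]_n'.+1)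
  j i c j' i' c' (w : int) :
  cornered Lam d fRep -> (0 < N)%N ->
  Vhat Lam d fRep xh `<=` box xh 0 A ->
  Spec Lam d fRep A C N M K s g xh j i c ->
  Spec Lam d fRep A C N M K s g' xh j' i' c' ->
  (forall l, g 0 l - g' 0 l = (N%:R)^-1 * w%:~R) -> 0 < w -> False.
Proof.
move=> Hc N0 Hb [Hx Hg _ _ _] [_ Hg' Hns _ _] Hd w0.
apply: Hns; apply: (between Hc Hx _ _ Hg) => l; rewrite !mxE.
  have := int_gt Hb Hg' l; have : (0 : R) < (N%:R)^-1 by rewrite invr_gt0 ltr0n.
  lra.
have := Hd l.
have hw : (1 : R) <= w%:~R by rewrite ler1z.
have hN : (0 : R) < (N%:R)^-1 by rewrite invr_gt0 ltr0n.
nra.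
Qed.

Lemma spec_inj (R : realType) n' (Lam : set 'rV[R]_n'.+1) (X : finType) (d : X -> 'rV[R]_n'.+1)
  (fRep : set (X * 'rV[R]_n'.+1)) (A C : R) (N q M K : nat) (s xh : 'rV[R]_n'.+1)
  (v v' : {ffun 'I_n'.+1 -> 'I_(q * N)}) j i c :
  cornered Lam d fRep -> (0 < N)%N ->
  Vhat Lam d fRep xh `<=` box xh 0 A ->
  Spec Lam d fRep A C N M K s (grid_pt N q s v) xh j i c ->
  Spec Lam d fRep A C N M K s (grid_pt N q s v') xh j i c -> v = v'.
Proof.
move=> Hc N0 Hb S1 S2.
have hN : (N%:R : R) != 0 by rewrite pnatr_eq0 -lt0n.
have Hd : forall l, (grid_pt N q s v) 0 l - (grid_pt N q s v') 0 l =
   (N%:R)^-1 * ((v l : nat)%:R - (v' l : nat)%:R).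
  move=> l; have [e1 _] := grid_coord s v l N0; have [e2 _] := grid_coord s v' l N0.
  by rewrite e1 e2 mulrBr; lra.
have S1' := S1; have S2' := S2.
case: S1' => _ _ _ _ [k [/andP [hk1 hk2] hk3]].
case: S2' => _ _ _ _ [k' [/andP [hk1' hk2'] hk3']].
have Ht : forall l, N%:R * ((grid_pt N q s v) 0 l - xh 0 l) - N%:R * ((grid_pt N q s v') 0 l - xh 0 l)
   = (v l : nat)%:R - (v' l : nat)%:R.
  by move=> l; rewrite -mulrBr opprD addrACA subrr addr0 Hd mulrA mulfV // mul1r.
have Hz : forall l, ((v l : nat)%:Z - (v' l : nat)%:Z = k - k')%R.
  move=> l; apply/eqP; rewrite -subr_eq0; apply/eqP; apply: (int_small (R := R)).
  rewrite !intrD !intrN /=.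
  have ht := Ht l.
  have [l' El|El] := unliftP i l; subst l.
  - have := hk3 l'; have := hk3' l' => /andP [h1 h2] /andP [h3 h4].
    rewrite ltr_norml; apply/andP; split; lra.
  - rewrite ltr_norml; apply/andP; split; lra.
have Hw : forall l, (grid_pt N q s v) 0 l - (grid_pt N q s v') 0 l = (N%:R)^-1 * (k - k')%:~R.
  by move=> l; rewrite Hd -(Hz l) intrD intrN.
case: (ltgtP (k - k') 0) => hw.
- exfalso; apply: (one_side (w := - (k - k')) Hc N0 Hb S2 S1).
    by move=> l; rewrite intrN mulrN -(Hw l) opprB.
  by rewrite oppr_gt0.
- exfalso; exact: (one_side Hc N0 Hb S1 S2 Hw hw).
- apply/ffunP => l; apply/val_inj; have := Hz l; rewrite hw => /eqP.
  by rewrite subr_eq0 => /eqP [].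
Qed.

Lemma code_exists (R : realType) n' (Lam : set 'rV[R]_n'.+1) (X : finType) (d : X -> 'rV[R]_n'.+1)
  (fRep : set (X * 'rV[R]_n'.+1)) (A C : R) (N q : nat) (s : 'rV[R]_n'.+1)
  (v : {ffun 'I_n'.+1 -> 'I_(q * N)}) :
  infrastructure Lam d fRep -> cornered Lam d fRep -> 0 < A ->
  (forall xh, Xhat Lam d xh -> Vhat Lam d fRep xh `<=` box xh 0 A) -> 0 < C -> (0 < N)%N ->
  (exists xh, Xhat Lam d xh /\ interior (Vhat Lam d fRep xh) (grid_pt N q s v)) ->
  msum (box_oc 0 (- (N%:R)^-1) 0) (Hset Lam d fRep) (grid_pt N q s v) ->
  exists (j : {ffun 'I_n'.+1 -> 'I_(Num.truncn ((q%:R + A) / C)).+1}) (i : 'I_n'.+1)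
         (c : {ffun 'I_n' -> 'I_(Num.truncn (N%:R * A)).+1}) xh,
    Spec Lam d fRep A C N _ _ s (grid_pt N q s v) xh j i c.
Proof.
move=> Hi Hc A0 Hb C0 N0 [xh [Hx Hint]] Hbad.
set g := grid_pt N q s v.
have hN : (0 : R) < N%:R by rewrite ltr0n.
have Hbx := Hb xh Hx.
have Hgt := int_gt Hbx Hint.
have Hle : forall l, g 0 l <= xh 0 l + A.
  move=> l; have := Hbx g (nbhs_singleton Hint) l => /andP [_ ->] //.
set t := fun l => N%:R * (g 0 l - xh 0 l).
have ht0 : forall l, 0 < t l.
  by move=> l; rewrite /t mulr_gt0 // subr_gt0 Hgt.
have htA : forall l, t l <= N%:R * A.
  by move=> l; rewrite /t ler_pM2l //; have := Hle l; lra.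
case: (@arg_minP _ _ _ ord0 predT t isT) => i _ Hi0.
set k := Num.ceil (t i) - 1.
have [hk1 hk2] : k%:~R < t i /\ t i <= k%:~R + 1.
  have /andP [h1 h2] := ceil_itv (t i).
  by rewrite -intrD1 /k subrK.
have hk0 : (0 : R) <= k%:~R.
  rewrite ler0z /k; have : (0 < Num.ceil (t i))%R by rewrite ceil_gt0.
  lia.
exists [ffun l => inord (Num.truncn ((xh 0 l - s 0 l + A) / C))], i,
       [ffun l' => inord (Num.truncn (t (lift i l') - k%:~R))], xh.
split => //.
- exact: (succ_not_int Hi Hc Hbx Hx Hint Hbad).
- move=> l; rewrite !mxE ffunE.
  have [e1 /andP [ha hb]] := grid_coord s v l N0.
  have := Hgt l; have := Hle l; rewrite /g e1 => h1 h2.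
  set x := (xh 0 l - s 0 l + A) / C.
  have x0 : 0 <= x by rewrite /x divr_ge0 //; [lra | exact: ltW].
  have xq : x <= (q%:R + A) / C by rewrite /x ler_pM2r ?invr_gt0 //; lra.
  have hxC : x * C = xh 0 l - s 0 l + A by rewrite /x divfK // gt_eqF.
  rewrite inordK; last by rewrite ltnS le_truncn.
  have /andP [t1 t2] := truncn_itv x0.
  rewrite -natr1 in t2.
  apply/andP; split; nra.
- exists k; split; first by apply/andP; split.
  move=> l'; rewrite ffunE.
  have hu : t i <= t (lift i l') by apply: Hi0.
  have u0 : 0 <= t (lift i l') - k%:~R by lra.
  rewrite inordK; last first.
    by rewrite ltnS le_truncn //; have := htA (lift i l'); lra.
  have /andP [t1 t2] := truncn_itv u0.
  rewrite -natr1 in t2.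
  by apply/andP; split.
Qed.

Lemma count_bad (R : realType) n' (Lam : set 'rV[R]_n'.+1) (X : finType) (d : X -> 'rV[R]_n'.+1)
  (fRep : set (X * 'rV[R]_n'.+1)) (A C D eps : R) (N q : nat) (s : 'rV[R]_n'.+1) :
  infrastructure Lam d fRep -> cornered Lam d fRep -> 0 < A ->
  (forall xh, Xhat Lam d xh -> Vhat Lam d fRep xh `<=` box xh 0 A) -> 0 < C ->
  (forall r, at_most (box r 0 C `&` Xhat Lam d) D) -> (0 < N)%N -> 0 <= eps ->
  (forall v, ~ msum (Hset Lam d fRep) (box 0 (- eps) eps) (grid_pt N q s v)) ->
  (#|[set v : {ffun 'I_n'.+1 -> 'I_(q * N)} |
      grid_pt N q s v \in msum (box_oc 0 (- (N%:R)^-1) 0) (Hset Lam d fRep)]|%:R : R)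
  <= D * ((Num.truncn ((q%:R + A) / C)).+1%:R ^+ n'.+1 * n'.+1%:R *
          (Num.truncn (N%:R * A)).+1%:R ^+ n').
Proof.
move=> Hi Hc A0 Hb C0 HD N0 e0 Hg.
set M := (Num.truncn ((q%:R + A) / C)).+1.
set K := (Num.truncn (N%:R * A)).+1.
set Bd := [set v : {ffun 'I_n'.+1 -> 'I_(q * N)} | _].
have Hex : forall v, exists p : ({ffun 'I_n'.+1 -> 'I_M} * 'I_n'.+1 * {ffun 'I_n' -> 'I_K})
    * 'rV[R]_n'.+1, v \in Bd ->
    Spec Lam d fRep A C N M K s (grid_pt N q s v) p.2 p.1.1.1 p.1.1.2 p.1.2.
  move=> v; case: (boolP (v \in Bd)) => hv.
  - have hb : msum (box_oc 0 (- (N%:R)^-1) 0) (Hset Lam d fRep) (grid_pt N q s v).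
      by move: hv; rewrite inE /Bd /= in_setE.
    have [j [i [c [xh S]]]] := code_exists Hi Hc A0 Hb C0 N0 (good_int Hi e0 (Hg v)) hb.
    by exists ((j, i, c), xh).
  - by exists (([ffun=> ord0], ord0, [ffun=> ord0]), 0).
have [f Hf] := choice Hex.
have -> : (#|Bd|%:R : R) = \sum_(v in Bd) 1 by rewrite sumr_const.
rewrite (partition_big (fun v => (f v).1) predT) //=.
apply: (@le_trans _ _ (\sum_(tau : {ffun 'I_n'.+1 -> 'I_M} * 'I_n'.+1 * {ffun 'I_n' -> 'I_K}) D)).
  apply: ler_sum => tau _.
  rewrite sumr_const cardE -(size_map (fun v => (f v).2)).
  apply: (HD (rj s A C tau.1.1)).
  - rewrite map_inj_in_uniq ?enum_uniq // => v v'; rewrite !mem_enum.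
    move=> /andP [hv /eqP e] /andP [hv' /eqP e'] exi.
    have S1 := Hf v hv; have S2 := Hf v' hv'.
    rewrite e' -e -exi in S2.
    have [Hx _ _ _ _] := S1.
    exact: (spec_inj Hc N0 (Hb _ Hx) S1 S2).
  - move=> y /mapP [v]; rewrite mem_enum => /andP [hv /eqP e] ->.
    have [Hx _ _ Hbox _] := Hf v hv.
    by rewrite e in Hbox; split.
rewrite sumr_const card_prod card_prod !card_ffun !card_ord.
rewrite -[D *+ _]mulr_natl !natrM !natrX ?mulr1 mulrC.
exact: lexx.
Qed.


Lemma final_arith (R : realType) (n' : nat) (A C D : R) (N q : nat) (B Mr Kr : R) :
  0 < A -> 0 < C -> 0 < D -> (0 < N)%N -> (0 < q)%N -> 0 <= Mr -> 0 <= Kr ->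
  Mr <= (q%:R + A) / C + 1 -> Kr <= N%:R * A + 1 ->
  B <= D * (Mr ^+ n'.+1 * n'.+1%:R * Kr ^+ n') ->
  1 - (N%:R)^-1 * (n'.+1%:R * D * (q%:R + 1 + A + C) ^+ n'.+1 * (A + 2 / N%:R) ^+ n')
         / (C * q%:R) ^+ n'.+1 <= (((q * N) ^ n'.+1)%:R - B) / ((q * N) ^ n'.+1)%:R.
Proof.
move=> A0 C0 D0 N0 q0 M0 K0 HM HK HB.
have hN : (0 : R) < N%:R by rewrite ltr0n.
have hq : (0 : R) < q%:R by rewrite ltr0n.
have hT : (0 : R) < ((q * N) ^ n'.+1)%:R by rewrite ltr0n expn_gt0 muln_gt0 N0 q0.
rewrite mulrBl divff ?gt_eqF // lerD2l lerN2.
set P := q%:R + 1 + A + C; set Q := A + 2 / N%:R.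
have HM' : Mr <= P / C.
  apply: (le_trans HM); rewrite /P ler_pdivlMr // mulrDl divfK ?gt_eqF // mul1r; lra.
have HK' : Kr <= N%:R * Q.
  rewrite /Q mulrDr mulrCA mulfV ?gt_eqF // mulr1; lra.
apply: (@le_trans _ _ (D * ((P / C) ^+ n'.+1 * n'.+1%:R * (N%:R * Q) ^+ n') /
   ((q * N) ^ n'.+1)%:R)).
  rewrite ler_pM2r ?invr_gt0 //; apply: (le_trans HB); rewrite ler_pM2l //.
  apply: ler_pM; first by rewrite mulr_ge0 // exprn_ge0.
  - by rewrite exprn_ge0.
  - rewrite ler_pM2r ?ltr0n //; apply: lerXn2r; rewrite ?nnegrE //.
    exact: (le_trans M0 HM').
  - apply: lerXn2r; rewrite ?nnegrE //.
    exact: (le_trans K0 HK').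
rewrite le_eqVlt; apply/orP; left; apply/eqP.
rewrite natrX natrM expr_div_n !exprMn !exprS.
have c1 : C ^+ n' != 0 by rewrite expf_neq0 // gt_eqF.
have c2 : q%:R ^+ n' != 0 :> R by rewrite expf_neq0 // gt_eqF.
have c3 : N%:R ^+ n' != 0 :> R by rewrite expf_neq0 // gt_eqF.
move: (C ^+ n') c1 (q%:R ^+ n' : R) c2 (N%:R ^+ n' : R) c3 (P ^+ n') (Q ^+ n') => c1 h1 c2 h2 c3 h3 p1 q1.
move: (n'.+1%:R : R) => m.
field.
by rewrite h1 h2 h3 !gt_eqF.
Qed.

Lemma card_good (R : realType) n (N q : nat) (s : 'rV[R]_n) (Hb : set 'rV[R]_n) :
  (#|[set v : {ffun 'I_n -> 'I_(q * N)} | grid_pt N q s v \notin Hb]|%:R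
     / #|[set: {ffun 'I_n -> 'I_(q * N)}]|%:R : R) =
  (((q * N) ^ n)%:R - #|[set v : {ffun 'I_n -> 'I_(q * N)} | grid_pt N q s v \in Hb]|%:R)
     / ((q * N) ^ n)%:R.
Proof.
set Bd := [set v : {ffun 'I_n -> 'I_(q * N)} | grid_pt N q s v \in Hb].
have eT : #|[set: {ffun 'I_n -> 'I_(q * N)}]| = #|{ffun 'I_n -> 'I_(q * N)}|.
  by apply: eq_card => v; rewrite !inE; apply: mem_set.
have Hcard : (#|[set v : {ffun 'I_n -> 'I_(q * N)} | grid_pt N q s v \notin Hb]|
   + #|Bd| = #|[set: {ffun 'I_n -> 'I_(q * N)}]|)%N.
  rewrite eT -(cardC (mem Bd)) addnC; congr (_ + _)%N.
  apply: eq_card => v; rewrite !inE.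
  apply/idP/idP => h.
  - move/set_mem: h => /= h; apply/negP => /set_mem /= h'.
    by rewrite h' in h.
  - apply: mem_set => /=; apply/negP => h'; move/negP: h; apply; exact: mem_set.
have eT' : #|[set: {ffun 'I_n -> 'I_(q * N)}]| = ((q * N) ^ n)%N.
  by rewrite eT card_ffun !card_ord.
rewrite -eT' -Hcard natrD addrK.
by [].
Qed.

Unset Implicit Arguments. Set Strict Implicit.

Theorem proposition5p1 (R : realType) (n : nat) (Lam : set 'rV[R]_n)
  (X : finType) (d : X -> 'rV[R]_n) (fRep : set (X * 'rV[R]_n))
  (A C D : R) (N q L : nat) (eps : R) (s : 'rV[R]_n) :
  infrastructure Lam d fRep ->
  cornered Lam d fRep ->
  0 < A ->
  (forall xh, Xhat Lam d xh -> Vhat Lam d fRep xh `<=` box xh 0 A) ->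
  0 < C -> 0 < D ->
  (forall r, at_most (box r 0 C `&` Xhat Lam d) D) ->
  (0 < N)%N -> (0 < q)%N -> (0 < L)%N ->
  0 < eps -> eps <= (2 * N%:R * L%:R)^-1 ->
  (exists k : 'I_n -> nat, (forall i, (k i < L)%N) /\
      s = (N%:R * L%:R)^-1 *: \row_i ((k i)%:R)) ->
  (forall v, ~ msum (Hset Lam d fRep) (box 0 (- eps) eps) (grid_pt N q s v)) ->
  let Hbound := msum (box_oc 0 (- (N%:R)^-1) 0) (Hset Lam d fRep) in
  (#|[set v : {ffun 'I_n -> 'I_(q * N)} | grid_pt N q s v \notin Hbound]|%:R
     / #|[set: {ffun 'I_n -> 'I_(q * N)}]|%:R : R)
  >= 1 - (N%:R)^-1 * (n%:R * D * (q%:R + 1 + A + C) ^+ n * (A + 2 / N%:R) ^+ n.-1)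
         / (C * q%:R) ^+ n.
Proof.
move: Lam d fRep s; case: n => [|n'] Lam d fRep s.
- move=> Hi Hc A0 Hb C0 D0 HD N0 q0 L0 e0 eL _ Hg; cbv zeta.
  rewrite card_good.
  set Bd := [set v : {ffun 'I_0 -> 'I_(q * N)} | _].
  have -> : #|Bd| = 0%N.
    apply: eq_card0 => v; apply/negP => /set_mem /= /set_mem hb.
    have [xh [Hx Hint]] := good_int Hi (ltW e0) (Hg v).
    apply: (succ_not_int Hi Hc (Hb xh Hx) Hx Hint hb).
    by rewrite [_ + _]thinmx0 [grid_pt _ _ _ _]thinmx0 in Hint *.
  by rewrite !mul0r mulr0 mul0r subr0 expn0 divr1.
- move=> Hi Hc A0 Hb C0 D0 HD N0 q0 L0 e0 eL _ Hg; cbv zeta.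
  rewrite card_good.
  have hB := count_bad Hi Hc A0 Hb C0 HD N0 (ltW e0) Hg.
  apply: (final_arith A0 C0 D0 N0 q0 _ _ _ _ hB) => //.
  + rewrite -natr1 lerD2r truncn_le divr_ge0 // ?ltW //.
    by rewrite addr_gt0 // ltr0n.
  + by rewrite -natr1 lerD2r truncn_le mulr_ge0 // ltW.
Qed.
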